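(* Let $F:\mathcal{P}(V,A)\to S_2(A)$ be a consular election rule satisfying SPP and SPO. Let $P$ be a profile with $F(P)=\{a,b\}$, let $i$ be a voter, $s\in A$, and let $P_i'$ be the linear order obtained from $P_i$ by moving $s$ up some number of positions (the relative order of the other alternatives unchanged). If $s\in\{a,b\}$, then $F(P_i'P_{-i})=F(P)$. If $s\notin\{a,b\}$, then either $F(P_i'P_{-i})=F(P)$, or $F(P_i'P_{-i})=(\{a,b\}\setminus\{x\})\cup\{s\}$ for some $x\in\{a,b\}$; and the latter happens only if $s$ overtakes $x$, i.e. $x\succ_i s$ in $P_i$ and $s\succ_i' x$ in $P_i'$.
   Context: $V$ is a finite nonempty set of voters, $A$ a finite set of alternatives; a profile $P$ assigns to each voter $i$ a linear order $P_i$ on $A$; $P_i'P_{-i}$ replaces voter $i$'s order by $P_i'$. $S_2(A)$ is the set of 2-element subsets of $A$; a consular election rule is a map $F:\mathcal{P}(V,A)\to S_2(A)$. SPO: for all $P$, $i$, $P_i'$, $\mathrm{best}(P_i,F(P))\succeq_i\mathrm{best}(P_i,F(P_i'P_{-i}))$; SPP: same with $\mathrm{worst}$, where $\mathrm{best}(P_i,W)$, $\mathrm{worst}(P_i,W)$ are the $P_i$-best and $P_i$-worst elements of $W$. *)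

(* Defs.v *)
From mathcomp Require Import all_boot.
Set Implicit Arguments. Unset Strict Implicit. Unset Printing Implicit Defensive.

(* A linear order on A, given by its strict "is preferred to" relation:
   [lo_rel R x y] means x is strictly better than y. *)
Record lorder (A : finType) := LOrder {
  lo_rel : rel A;
  lo_irr : irreflexive lo_rel;
  lo_trans : transitive lo_rel;
  lo_total : forall x y, x != y -> lo_rel x y || lo_rel y x
}.

Definition profile (V A : finType) := V -> lorder A.

Definition upd (V A : finType) (P : profile V A) (i : V) (Ri : lorder A)
  : profile V A := fun j => if j == i then Ri else P j.

Definition consular (V A : finType) (F : profile V A -> {set A}) :=
  forall P, #|F P| = 2.

Definition is_best (A : finType) (R : lorder A) (W : {set A}) (x : A) :=
  x \in W /\ forall y, y \in W -> y != x -> lo_rel R x y.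
Definition is_worst (A : finType) (R : lorder A) (W : {set A}) (x : A) :=
  x \in W /\ forall y, y \in W -> y != x -> lo_rel R y x.

Definition weakpref (A : finType) (R : lorder A) (x y : A) :=
  x = y \/ lo_rel R x y.

Definition SPO (V A : finType) (F : profile V A -> {set A}) :=
  forall (P : profile V A) (i : V) (Ri' : lorder A) (x y : A),
    is_best (P i) (F P) x -> is_best (P i) (F (upd P i Ri')) y ->
    weakpref (P i) x y.

Definition SPP (V A : finType) (F : profile V A -> {set A}) :=
  forall (P : profile V A) (i : V) (Ri' : lorder A) (x y : A),
    is_worst (P i) (F P) x -> is_worst (P i) (F (upd P i Ri')) y ->
    weakpref (P i) x y.

(* R' is obtained from R by moving s up some number of positions:
   the relative order of the alternatives other than s is unchanged,
   and every alternative below s in R is still below s in R'. *)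
Definition moves_up (A : finType) (R R' : lorder A) (s : A) :=
  (forall x y, x != s -> y != s -> lo_rel R' x y = lo_rel R x y) /\
  (forall x, lo_rel R s x -> lo_rel R' s x).

(* Main.v *)
Require Import Defs.
From mathcomp Require Import all_boot.
From mathcomp Require Import zify.
From Stdlib Require Import FunctionalExtensionality.
Set Implicit Arguments. Unset Strict Implicit. Unset Printing Implicit Defensive.

Definition rk (A : finType) (R : lorder A) (x : A) := #|[pred y | lo_rel R y x]|.

Section Orders.
Variable A : finType.
Implicit Types R : lorder A.

Lemma nsym (x y : A) : x != y -> y != x.
Proof. by rewrite eq_sym. Qed.

Lemma ltr R x y z : lo_rel R x y -> lo_rel R y z -> lo_rel R x z.
Proof. exact: (@lo_trans _ R y x z). Qed.

Lemma lo_asym R x y : lo_rel R x y -> lo_rel R y x -> False.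
Proof. by move=> h1 h2; have := ltr h1 h2; rewrite lo_irr. Qed.

Lemma lo_tot R x y : x != y -> lo_rel R x y \/ lo_rel R y x.
Proof. by move/(lo_total R)/orP. Qed.

Lemma rk_lt R x y : lo_rel R x y -> rk R x < rk R y.
Proof.
move=> Hxy; apply: proper_card; apply/properP; split.
  apply/subsetP => z; rewrite !inE => Hz; exact: ltr Hz Hxy.
by exists x; rewrite !inE ?Hxy // lo_irr.
Qed.

Lemma rk_ltE R x y : lo_rel R x y = (rk R x < rk R y).
Proof.
apply/idP/idP; first exact: rk_lt.
move=> H; case: (eqVneq x y) => [exy|nxy]; first by move: H; rewrite exy ltnn.
case: (lo_tot R nxy) => // Hyx.
by have := rk_lt Hyx; rewrite ltnNge (ltnW H).
Qed.

Lemma rk_inj R x y : rk R x = rk R y -> x = y.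
Proof.
move=> E; case: (eqVneq x y) => // nxy.
by case: (lo_tot R nxy) => /rk_lt; rewrite E ltnn.
Qed.

Lemma rk_neq R x y : x != y -> rk R x <> rk R y.
Proof. by move=> h /rk_inj e; rewrite e eqxx in h. Qed.

Lemma best2 R x y : x != y ->
  exists z, is_best R [set x; y] z /\ rk R z = minn (rk R x) (rk R y).
Proof.
move=> nxy; case: (boolP (lo_rel R x y)) => H.
  exists x; split; last by move: H; rewrite rk_ltE; lia.
  split; first by rewrite !inE eqxx.
  by move=> w; rewrite !inE => /orP [/eqP ->|/eqP ->]; rewrite ?eqxx.
have Hyx : lo_rel R y x by move: (lo_total R nxy); rewrite (negbTE H).
exists y; split; last by move: Hyx; rewrite rk_ltE; lia.
split; first by rewrite !inE eqxx orbT.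
by move=> w; rewrite !inE => /orP [/eqP ->|/eqP ->]; rewrite ?eqxx.
Qed.

Lemma worst2 R x y : x != y ->
  exists z, is_worst R [set x; y] z /\ rk R z = maxn (rk R x) (rk R y).
Proof.
move=> nxy; case: (boolP (lo_rel R x y)) => H.
  exists y; split; last by move: H; rewrite rk_ltE; lia.
  split; first by rewrite !inE eqxx orbT.
  by move=> w; rewrite !inE => /orP [/eqP ->|/eqP ->]; rewrite ?eqxx.
have Hyx : lo_rel R y x by move: (lo_total R nxy); rewrite (negbTE H).
exists x; split; last by move: Hyx; rewrite rk_ltE; lia.
split; first by rewrite !inE eqxx.
by move=> w; rewrite !inE => /orP [/eqP ->|/eqP ->]; rewrite ?eqxx.
Qed.

Lemma weak_rk R x y : weakpref R x y -> rk R x <= rk R y.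
Proof. by case=> [->//|/rk_lt/ltnW]. Qed.

Lemma mu_agree R R' s x y : moves_up R R' s -> x != s -> y != s ->
  lo_rel R' x y = lo_rel R x y.
Proof. by case=> H _; apply: H. Qed.

Lemma mu_up R R' s x : moves_up R R' s -> lo_rel R s x -> lo_rel R' s x.
Proof. by case=> _ H; apply: H. Qed.

Lemma mu_down R R' s x : moves_up R R' s -> lo_rel R' x s -> lo_rel R x s.
Proof.
move=> Hm h; case: (eqVneq x s) => [e|nxs]; first by move: h; rewrite e lo_irr.
case: (lo_tot R nxs) => // /(mu_up Hm) h'; case: (lo_asym h h').
Qed.

Definition passed R R' s := [set x | lo_rel R x s && lo_rel R' s x].

Lemma setD1Ua (a b s : A) : a != b -> [set a; b] :\ a :|: [set s] = [set b; s].
Proof.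
move=> nab; apply/setP => z; rewrite !inE.
case: (eqVneq z a) => [->|] //=.
by rewrite (negbTE nab) eq_sym.
Qed.

Lemma setD1Ub (a b s : A) : a != b -> [set a; b] :\ b :|: [set s] = [set a; s].
Proof.
move=> nab; apply/setP => z; rewrite !inE.
case: (eqVneq z b) => [->|] /=; first by rewrite [b == a]eq_sym (negbTE nab).
move=> _; by rewrite orbF.
Qed.

Definition sw (s y u : A) := if u == s then y else if u == y then s else u.

Lemma swK s y : involutive (sw s y).
Proof.
move=> u; rewrite /sw.
case: (eqVneq u s) => [->|nus].
  by case: (eqVneq y s) => [->|nys]; rewrite ?eqxx.
case: (eqVneq u y) => [->|nuy]; first by rewrite eqxx.
by rewrite (negbTE nus) (negbTE nuy).
Qed.

Definition swrel R s y : rel A := fun u v => lo_rel R (sw s y u) (sw s y v).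
Lemma swrel_irr R s y : irreflexive (swrel R s y).
Proof. by move=> u; apply: lo_irr. Qed.
Lemma swrel_trans R s y : transitive (swrel R s y).
Proof. by move=> v u w; apply: ltr. Qed.
Lemma swrel_tot R s y u v : u != v -> swrel R s y u v || swrel R s y v u.
Proof.
move=> h; apply: lo_total; apply: contra h => /eqP e; apply/eqP.
exact: (can_inj (swK s y)).
Qed.
Definition swo R s y := LOrder (@swrel_irr R s y) (@swrel_trans R s y) (@swrel_tot R s y).

Lemma sw_s s y : sw s y s = y. Proof. by rewrite /sw eqxx. Qed.
Lemma sw_y s y : s != y -> sw s y y = s.
Proof. by move=> h; rewrite /sw eq_sym (negbTE h) eqxx. Qed.
Lemma sw_o s y u : u != s -> u != y -> sw s y u = u.
Proof. by move=> h1 h2; rewrite /sw (negbTE h1) (negbTE h2). Qed.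

Section Swap.
Variables (R : lorder A) (s y : A).
Hypothesis Hys : lo_rel R y s.
Hypothesis Hadj : forall z, lo_rel R y z -> lo_rel R z s -> False.

Lemma nsy : s != y.
Proof. by apply: contraTneq Hys => ->; rewrite lo_irr. Qed.

Lemma adj1 z : z != s -> z != y -> lo_rel R s z = lo_rel R y z.
Proof.
move=> zs zy; apply/idP/idP => h; first exact: ltr Hys h.
case: (lo_tot R zs) => // h'; case: (Hadj h h').
Qed.

Lemma adj2 z : z != s -> z != y -> lo_rel R z s = lo_rel R z y.
Proof.
move=> zs zy; apply/idP/idP => h; last exact: ltr h Hys.
case: (lo_tot R zy) => // h'; case: (Hadj h' h).
Qed.

Lemma swo_up : moves_up R (swo R s y) s.
Proof.
split.
  move=> u v us vs; rewrite /= /swrel.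
  case: (eqVneq u y) => [->|uy]; case: (eqVneq v y) => [->|vy].
  - by rewrite !lo_irr.
  - by rewrite sw_y ?nsy // sw_o // adj1.
  - by rewrite sw_y ?nsy // sw_o // adj2.
  - by rewrite !sw_o.
move=> x h; rewrite /= /swrel sw_s.
case: (eqVneq x s) => [e|xs]; first by move: h; rewrite e lo_irr.
case: (eqVneq x y) => [e|xy]; first by case: (lo_asym Hys); rewrite -e.
by rewrite sw_o //; apply: ltr Hys h.
Qed.

Lemma swo_passed : passed R (swo R s y) s = [set y].
Proof.
apply/setP => x; rewrite !inE /= /swrel sw_s.
case: (eqVneq x s) => [->|xs]; first by rewrite lo_irr (negbTE nsy).
case: (eqVneq x y) => [->|xy]; first by rewrite sw_y ?nsy // Hys ?eqxx.
rewrite sw_o //; apply/negP => /andP [h1 h2]; case: (Hadj h2 h1).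
Qed.

Variable R' : lorder A.
Hypothesis Hm : moves_up R R' s.
Hypothesis Hyp : y \in passed R R' s.
Hypothesis Hworst : forall z, z \in passed R R' s -> z != y -> lo_rel R z y.

Lemma swo_up2 : moves_up (swo R s y) R' s.
Proof.
move: Hyp; rewrite inE => /andP [_ Hsy].
split.
  move=> u v us vs; rewrite /= /swrel (mu_agree Hm) //.
  case: (eqVneq u y) => [->|uy]; case: (eqVneq v y) => [->|vy].
  - by rewrite !lo_irr.
  - by rewrite sw_y ?nsy // sw_o // adj1.
  - by rewrite sw_y ?nsy // sw_o // adj2.
  - by rewrite !sw_o.
move=> x; rewrite /= /swrel sw_s.
case: (eqVneq x s) => [->|xs]; first by rewrite sw_s lo_irr.
case: (eqVneq x y) => [->|xy]; first by [].
rewrite sw_o // => h; apply: ltr Hsy _.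
rewrite (mu_agree Hm) //; apply: contraNneq nsy => ->.
by [].
Qed.

Lemma swo_passed2 : passed (swo R s y) R' s \subset passed R R' s :\ y.
Proof.
apply/subsetP => x; rewrite !inE /= /swrel sw_s.
case: (eqVneq x s) => [->|xs]; first by rewrite sw_s lo_irr.
case: (eqVneq x y) => [->|xy].
  by rewrite sw_y ?nsy // => /andP [h _]; case: (lo_asym h Hys).
rewrite sw_o // => /andP [h1 h2]; rewrite h2 andbT; exact: ltr h1 Hys.
Qed.
End Swap.
End Orders.

Section Main.
Variables (V A : finType) (F : profile V A -> {set A}).
Hypotheses (HF : consular F) (Hspp : SPP F) (Hspo : SPO F).

Lemma upd_i (P : profile V A) i R : upd P i R i = R.
Proof. by rewrite /upd eqxx. Qed.

Lemma upd_upd (P : profile V A) i R R' : upd (upd P i R) i R' = upd P i R'.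
Proof.
by apply: functional_extensionality => j; rewrite /upd; case: eqP.
Qed.

Lemma upd_id (P : profile V A) i : upd P i (P i) = P.
Proof.
by apply: functional_extensionality => j; rewrite /upd; case: eqP => // ->.
Qed.

Lemma two (W : {set A}) : #|W| = 2 -> exists c d, c != d /\ W = [set c; d].
Proof. by move=> h; apply/cards2P; rewrite h. Qed.

Lemma ineqs (P : profile V A) i Ri' a b c d :
  F P = [set a; b] -> F (upd P i Ri') = [set c; d] -> a != b -> c != d ->
  [/\ minn (rk (P i) a) (rk (P i) b) <= minn (rk (P i) c) (rk (P i) d),
      maxn (rk (P i) a) (rk (P i) b) <= maxn (rk (P i) c) (rk (P i) d),
      minn (rk Ri' c) (rk Ri' d) <= minn (rk Ri' a) (rk Ri' b) &
      maxn (rk Ri' c) (rk Ri' d) <= maxn (rk Ri' a) (rk Ri' b)].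
Proof.
move=> Hab HQ nab ncd.
set Q := upd P i Ri'.
have HQi : Q i = Ri' by rewrite /Q upd_i.
have HQP : upd Q i (P i) = P by rewrite /Q upd_upd upd_id.
have [zPab [bPab ePab]] := best2 (P i) nab.
have [zPcd [bPcd ePcd]] := best2 (P i) ncd.
have [zRab [bRab eRab]] := best2 Ri' nab.
have [zRcd [bRcd eRcd]] := best2 Ri' ncd.
have [wPab [wbPab wePab]] := worst2 (P i) nab.
have [wPcd [wbPcd wePcd]] := worst2 (P i) ncd.
have [wRab [wbRab weRab]] := worst2 Ri' nab.
have [wRcd [wbRcd weRcd]] := worst2 Ri' ncd.
have h1 := weak_rk (@Hspo P i Ri' zPab zPcd ltac:(by rewrite Hab) ltac:(by rewrite -/Q HQ)).
have h2 := weak_rk (@Hspp P i Ri' wPab wPcd ltac:(by rewrite Hab) ltac:(by rewrite -/Q HQ)).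
have h3 := weak_rk (@Hspo Q i (P i) zRcd zRab ltac:(by rewrite HQi HQ) ltac:(by rewrite HQi HQP Hab)).
have h4 := weak_rk (@Hspp Q i (P i) wRcd wRab ltac:(by rewrite HQi HQ) ltac:(by rewrite HQi HQP Hab)).
rewrite HQi in h3 h4.
rewrite ePab ePcd wePab wePcd in h1 h2.
rewrite eRab eRcd weRab weRcd in h3 h4.
by split.
Qed.

Definition Bad (R R' : lorder A) s :=
  exists x y, [/\ x != y, x \in passed R R' s & y \in passed R R' s].

Definition Good (R R' : lorder A) s (a b : A) (W : {set A}) :=
  exists2 x, x \in [set a; b] &
    [/\ W = [set a; b] :\ x :|: [set s], lo_rel R x s & lo_rel R' s x].

Lemma core (P : profile V A) i s Ri' a b c d (Hm : moves_up (P i) Ri' s)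
  (Hab : F P = [set a; b]) (Hcd : F (upd P i Ri') = [set c; d])
  (pab : rk (P i) a < rk (P i) b) (pcd : rk (P i) c < rk (P i) d) :
  [set c; d] = [set a; b] \/
  (s \notin [set a; b] /\ (Good (P i) Ri' s a b [set c; d] \/ Bad (P i) Ri' s)).
Proof.
have nab : a != b by apply: contraTneq pab => ->; rewrite ltnn.
have ncd : c != d by apply: contraTneq pcd => ->; rewrite ltnn.
have [h1 h2 h3 h4] := ineqs Hab Hcd nab ncd.
set R := P i in pab pcd h1 h2 h3 h4 *.
rewrite (minn_idPl (ltnW pab)) (minn_idPl (ltnW pcd)) in h1.
rewrite (maxn_idPr (ltnW pab)) (maxn_idPr (ltnW pcd)) in h2.
have Ag x y : x != s -> y != s -> rk R x < rk R y -> rk Ri' x < rk Ri' y.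
  by move=> xs ys; rewrite -!rk_ltE (mu_agree Hm).
have Up x : rk R s < rk R x -> rk Ri' s < rk Ri' x.
  by rewrite -!rk_ltE; apply: mu_up.
have Pn x y : x != y -> rk R x <> rk R y by apply: rk_neq.
have Rn x y : x != y -> rk Ri' x <> rk Ri' y by apply: rk_neq.
have inab : forall x, (x \in [set a; b]) = (x == a) || (x == b).
  by move=> x; rewrite !inE.
case: (eqVneq s a) => [esa|nsa].
  subst s; left.
  have rab := Up b pab.
  case: (eqVneq c a) => [eca|nca]; last first.
    have := Pn _ _ nca => ?.
    have rc := Up c ltac:(lia).
    have nda : d != a by apply: contraTneq pcd => ->; lia.
    have := Pn _ _ nda => ?.
    have rd := Up d ltac:(lia).
    lia.
  subst c.
  have nda : d != a by apply: contraTneq pcd => ->; lia.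
  have := Pn _ _ nda => ?.
  have rd := Up d ltac:(lia).
  case: (eqVneq d b) => [-> //|ndb].
  have := Pn _ _ ndb => ?.
  have := Ag b d (nsym nab) nda ltac:(lia).
  lia.
case: (eqVneq s b) => [esb|nsb].
  subst s; left.
  have := Pn _ _ nsa => ?.
  case: (eqVneq c b) => [ecb|ncb].
    subst c.
    have ndb : d != b by apply: contraTneq pcd => ->; lia.
    have := Pn _ _ ndb => ?.
    have rd := Up d ltac:(lia).
    have := Ag a d (nsym nsa) ndb ltac:(lia).
    lia.
  case: (eqVneq d b) => [edb|ndb].
    subst d.
    case: (eqVneq c a) => [-> //|nca].
    have := Pn _ _ nca => ?.
    have := Ag a c (nsym nsa) ncb ltac:(lia).
    lia.
  have := Pn _ _ ndb => ?.
  have rd := Up d ltac:(lia).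
  have := Ag a d (nsym nsa) ndb ltac:(lia).
  lia.
have snab : s \notin [set a; b] by rewrite inab negb_or nsa nsb.
have := Pn _ _ nsa => ?.
have := Pn _ _ nsb => ?.
have := Rn _ _ nsa => ?.
have := Rn _ _ nsb => ?.
have rab := Ag a b (nsym nsa) (nsym nsb) pab.
case: (eqVneq s c) => [esc|nsc].
  subst s.
  have nds : d != c by apply: contraTneq pcd => ->; lia.
  case: (eqVneq d b) => [edb|ndb].
    subst d; right; split => //; left; exists a; first by rewrite !inE eqxx.
    rewrite setD1Ua // rk_ltE.
    have ?: rk Ri' c < rk Ri' a by lia.
    split => //; [by rewrite setUC | lia | by rewrite rk_ltE].
  have := Pn _ _ ndb => ?.
  have := Ag b d (nsym nsb) nds ltac:(lia).
  lia.
case: (eqVneq s d) => [esd|nsd]; last first.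
  left.
  have rcd := Ag c d (nsym nsc) (nsym nsd) pcd.
  have eac : c = a.
    case: (eqVneq c a) => // nca; have := Pn _ _ nca => ?.
    have := Ag a c (nsym nsa) (nsym nsc) ltac:(lia); lia.
  have ebd : d = b.
    case: (eqVneq d b) => // ndb; have := Pn _ _ ndb => ?.
    have := Ag b d (nsym nsb) (nsym nsd) ltac:(lia); lia.
  by rewrite eac ebd.
subst s.
right; split => //.
have pas : rk R a < rk R d by lia.
have pbs : rk R b < rk R d by lia.
case: (eqVneq c a) => [eca|nca].
  subst c; left; exists b; first by rewrite !inE eqxx orbT.
  rewrite setD1Ub //; split => //; first by rewrite rk_ltE.
  rewrite rk_ltE; lia.
case: (eqVneq c b) => [ecb|ncb].
  subst c; left; exists a; first by rewrite !inE eqxx.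
  rewrite setD1Ua //; split => //; first by rewrite rk_ltE.
  rewrite rk_ltE; lia.
have := Pn _ _ nca => ?.
have := Ag a c (nsym nsa) (nsym nsc) ltac:(lia) => ?.
right; exists a, b; split => //; rewrite inE !rk_ltE; apply/andP; split; lia.
Qed.

Lemma GoodC (R R' : lorder A) s a b W : Good R R' s a b W -> Good R R' s b a W.
Proof.
case=> x hx [E h1 h2]; exists x; rewrite (setUC [set b] [set a]) //.
Qed.

Lemma nab_of (P : profile V A) a b : F P = [set a; b] -> a != b.
Proof. by move=> Hab; have := HF P; rewrite Hab cards2; case: (a != b). Qed.

Lemma analysis (P : profile V A) i s Ri' a b (Hm : moves_up (P i) Ri' s)
  (Hab : F P = [set a; b]) :
  (s \in [set a; b] -> F (upd P i Ri') = F P) /\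
  (s \notin [set a; b] -> F (upd P i Ri') = F P \/
     Good (P i) Ri' s a b (F (upd P i Ri')) \/ Bad (P i) Ri' s).
Proof.
have nab := nab_of Hab.
have [c [d [ncd Hcd]]] := two (HF (upd P i Ri')).
rewrite Hab Hcd.
wlog pab : a b Hab nab / rk (P i) a < rk (P i) b.
  move=> W; case: (ltngtP (rk (P i) a) (rk (P i) b)) => h; first exact: W.
    have := W b a ltac:(by rewrite Hab setUC) (nsym nab) h.
    rewrite (setUC [set b] [set a]) => -[H1 H2]; split => // hs.
    by case: (H2 hs) => [->|[/GoodC G|B]]; [left|right; left|right; right].
  by move/rk_inj: h => e; rewrite e eqxx in nab.
wlog pcd : c d Hcd ncd / rk (P i) c < rk (P i) d.
  move=> W; case: (ltngtP (rk (P i) c) (rk (P i) d)) => h; first exact: W.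
    have := W d c ltac:(by rewrite Hcd setUC) (nsym ncd) h.
    by rewrite (setUC [set d] [set c]).
  by move/rk_inj: h => e; rewrite e eqxx in ncd.
case: (core Hm Hab Hcd pab pcd) => [E|[sn [G|B]]].
- by rewrite E; split => // _; left.
- split; first by move=> h; rewrite h in sn.
  by move=> _; right; left.
- split; first by move=> h; rewrite h in sn.
  by move=> _; right; right.
Qed.

Lemma single (P : profile V A) i s Ri' a b (Hm : moves_up (P i) Ri' s)
  (Hab : F P = [set a; b]) (Hc : #|passed (P i) Ri' s| <= 1)
  (Hs : s \notin [set a; b]) :
  F (upd P i Ri') = F P \/ Good (P i) Ri' s a b (F (upd P i Ri')).
Proof.
have [_ H] := analysis Hm Hab.
case: (H Hs) => [->|[G|[x [y [nxy hx hy]]]]]; [by left|by right|].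
move/card_le1_eqP: Hc => Hc.
by move: nxy; rewrite (Hc x y hx hy) eqxx.
Qed.

Lemma induct i s n : forall (P : profile V A) Ri', moves_up (P i) Ri' s ->
  #|passed (P i) Ri' s| <= n -> forall a b, F P = [set a; b] ->
  s \notin [set a; b] ->
  F (upd P i Ri') = F P \/ Good (P i) Ri' s a b (F (upd P i Ri')).
Proof.
elim: n => [|n IH] P Ri' Hm Hc a b Hab Hs.
  by apply: single => //; apply: leq_trans Hc _.
case: (leqP #|passed (P i) Ri' s| 1) => h1; first exact: single.
set S := passed (P i) Ri' s in Hc h1.
have [y0 hy0] : exists y0, y0 \in S by apply/card_gt0P; lia.
case: (@arg_maxnP A y0 (fun z => z \in S) (rk (P i)) hy0) => y hyS hmax.
have hyS' := hyS; rewrite inE in hyS'; case/andP: hyS' => Hys Hsy.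
have ys : y != s by apply: contraTneq Hys => ->; rewrite lo_irr.
have Hadj : forall z, lo_rel (P i) y z -> lo_rel (P i) z s -> False.
  move=> z hyz hzs.
  have zs : z != s by apply: contraTneq hzs => ->; rewrite lo_irr.
  case: (boolP (lo_rel Ri' s z)) => hsz.
    have zS : z \in S by rewrite inE hzs hsz.
    have := hmax z zS; rewrite /= -/S => hle.
    have := rk_lt hyz; lia.
  have hzs' : lo_rel Ri' z s by case: (lo_tot Ri' zs) => // h; rewrite h in hsz.
  have hzy : lo_rel Ri' z y := ltr hzs' Hsy.
  rewrite (mu_agree Hm zs ys) in hzy.
  exact: lo_asym hyz hzy.
set M := swo (P i) s y.
have Hm1 : moves_up (P i) M s := swo_up Hys Hadj.
have Hp1 : passed (P i) M s = [set y] := swo_passed Hys Hadj.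
have Hm2 : moves_up M Ri' s := swo_up2 Hys Hadj Hm hyS.
have Hp2 : #|passed M Ri' s| <= n.
  have h : #|passed M Ri' s| <= #|S :\ y|.
    exact: subset_leq_card (swo_passed2 Hys Ri').
  have := cardsD1 y S; rewrite hyS add1n => hS.
  lia.
set PM := upd P i M.
have HPMi : PM i = M by rewrite /PM upd_i.
have EQ : upd PM i Ri' = upd P i Ri' by rewrite /PM upd_upd.
have nab := nab_of Hab.
case: (single (P:=P) (Ri':=M) Hm1 Hab ltac:(by rewrite Hp1 cards1) Hs)
  => [EPM | [x hx [EPMx hxs hsx]]].
  have := IH PM Ri' ltac:(by rewrite HPMi) ltac:(by rewrite HPMi) a b
    ltac:(by rewrite EPM) Hs.
  rewrite EQ EPM; case => [->|[x hx [E h1' h2']]]; first by left.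
  right; exists x => //; split => //.
  by rewrite HPMi in h1'; apply: mu_down Hm1 h1'.
have [u Hu] : exists u, F PM = [set u; s].
  move: hx; rewrite !inE => /orP [/eqP ex|/eqP ex]; rewrite -/PM EPMx ex.
    by exists b; rewrite setD1Ua.
  by exists a; rewrite setD1Ub.
have Hm2' : moves_up (PM i) Ri' s by rewrite HPMi.
have [H1 _] := analysis Hm2' Hu.
have := H1 ltac:(by rewrite !inE eqxx orbT).
rewrite EQ => ->.
right; exists x => //; split => //.
exact: mu_up Hm2 hsx.
Qed.

End Main.

Theorem lemma10 (V A : finType) (F : profile V A -> {set A})
  (HF : consular F) (Hspp : SPP F) (Hspo : SPO F)
  (P : profile V A) (a b : A) (Hab : F P = [set a; b])
  (i : V) (s : A) (Ri' : lorder A) (Hmove : moves_up (P i) Ri' s) :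
  (s \in [set a; b] -> F (upd P i Ri') = F P) /\
  (s \notin [set a; b] ->
     F (upd P i Ri') = F P \/
     exists x, [/\ x \in [set a; b],
                   F (upd P i Ri') = ([set a; b] :\ x) :|: [set s],
                   lo_rel (P i) x s & lo_rel Ri' s x]).
Proof.
split; first exact: (analysis HF Hspp Hspo Hmove Hab).1.
move=> hs.
case: (induct HF Hspp Hspo Hmove (leqnn _) Hab hs) => [->|[x hx [E h1 h2]]].
  by left.
by right; exists x; split.
Qed.
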